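(* Fix an integer $k\ge -1$. For every $g\ge 4k+3$, \[\#\{S\in\mathcal{S}_g\mid m(S)=g-k\}=\sum_{\overline{x}\in\mathcal{Y}(k)}\binom{g-3k-2}{k+1-a(\overline{x})-2b(\overline{x})}.\]
   Context: A numerical semigroup $S$ is a submonoid of $\mathbb{N}_0$ with finite complement; its genus is the size of the complement and $m(S)$ is its smallest nonzero element. $\mathcal{S}_g$ is the set of numerical semigroups of genus $g$. For $\overline{x}=(x_1,\ldots,x_t)\in\{1,2,3\}^t$ let $a(\overline{x})=\#\{i: x_i=2\}$ and $b(\overline{x})=\#\{i: x_i=3\}$. For an integer $k\ge 0$, $\mathcal{Y}(k)$ is the set of tuples $\overline{x}=(x_1,\ldots,x_{2k+1})\in\{1,2,3\}^{2k+1}$ such that (i) whenever $i_1,i_2,i_3\in[1,2k+1]$ satisfy $i_1+i_2=i_3$, $(x_{i_1},x_{i_2},x_{i_3})\ne(1,1,3)$, and (ii) $a(\overline{x})+2b(\overline{x})\le k+1$; and $\mathcal{Y}(-1)=\{\emptyset\}$ consists of the empty tuple (with $a=b=0$). *)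

(* Defs.v *)
From mathcomp Require Import all_boot all_order all_algebra.
From mathcomp Require Import finmap.
Set Implicit Arguments. Unset Strict Implicit. Unset Printing Implicit Defensive.
Import Order.TTheory GRing.Theory Num.Theory.


(* A numerical semigroup S is encoded by its (finite) set of gaps G = N0 \ S.
   S = complement of G is a submonoid of N0 iff 0 \notin G and the complement
   is closed under addition. *)
Definition is_ns_gaps (G : {fset nat}) : Prop :=
  (0 \notin G) /\ (forall a b : nat, a \notin G -> b \notin G -> (a + b)%N \notin G).

Definition genus (G : {fset nat}) : nat := #|` G|%fset.

Definition multiplicity_is (G : {fset nat}) (m : nat) : Prop :=
  [/\ (0 < m)%N, m \notin G & forall j : nat, (0 < j < m)%N -> j \in G].

Fixpoint allseq (n : nat) : seq (seq nat) :=
  match n with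
  | 0 => [:: [::]]
  | n'.+1 => [seq v :: s | v <- [:: 1; 2; 3]%N, s <- allseq n']
  end.

(* 1-based access x_i *)
Definition xat (x : seq nat) (i : nat) : nat := nth 0%N x i.-1.

Definition a_of (x : seq nat) : nat := count (pred1 2%N) x.
Definition b_of (x : seq nat) : nat := count (pred1 3%N) x.

Definition cond_i (x : seq nat) : bool :=
  all (fun i1 => all (fun i2 => all (fun i3 =>
      (i1 + i2 == i3) ==>
      ~~ [&& xat x i1 == 1%N, xat x i2 == 1%N & xat x i3 == 3%N])
    (iota 1 (size x))) (iota 1 (size x))) (iota 1 (size x)).

Definition cond_ii (k : int) (x : seq nat) : bool :=
  ((a_of x + 2 * b_of x)%:Z <= k + 1)%R.

Definition Y (k : int) : seq (seq nat) :=
  match k with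
  | Posz k' => [seq x <- allseq (2 * k').+1 | cond_i x && cond_ii k x]
  | Negz _ => [:: [::]]
  end.

(* Main.v *)
Require Import Defs.
From mathcomp Require Import all_boot all_order all_algebra.
From mathcomp Require Import finmap zify.
Import Order.TTheory GRing.Theory Num.Theory.
Set Implicit Arguments. Unset Strict Implicit. Unset Printing Implicit Defensive.


Definition gapb (m : nat) (t : seq nat) (j : nat) : bool :=
  [|| (0 < j < m)%N, (m < j < 2 * m)%N && (2 <= xat t (j - m))%N
    | (2 * m < j < 3 * m)%N && (3 <= xat t (j - 2 * m))%N].
Definition enc m t : {fset nat} := [fset j in filter (gapb m t) (iota 0 (3 * m))]%fset.

Lemma in_enc m t j : (j \in enc m t) = gapb m t j.
Proof.
rewrite /enc inE mem_filter mem_iota /=.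
case: (boolP (gapb m t j)) => //= /or3P[]; lia.
Qed.

Lemma map_xat t : map (xat t) (iota 1 (size t)) = t.
Proof.
rewrite -[1%N]addn0 iotaDl -map_comp.
by rewrite -[RHS](mkseq_nth 0%N) /mkseq; apply: eq_map => i /=; rewrite /xat add1n.
Qed.

Lemma count_enc m t : (0 < m)%N -> size t = m.-1 ->
  #|` enc m t| = (m.-1 + count (fun v => 2 <= v) t + count (fun v => 3 <= v) t)%N.
Proof.
move=> m0 st.
rewrite /enc card_fseq undup_id ?filter_uniq ?iota_uniq // size_filter.
have -> : (3 * m = m + (m + m))%N by lia.
rewrite !iotaD !count_cat add0n.
have -> : iota m m = map (addn m) (iota 0 m) by rewrite -iotaDl addn0.
have -> : iota (m + m) m = map (addn (2 * m)) (iota 0 m) by rewrite -iotaDl addn0 mul2n addnn.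
rewrite !count_map.
case: m m0 st => // m _ /= st.
have e1 : count (gapb m.+1 t) (iota 1 m) = m.
  rewrite -[RHS](size_iota 1 m) -count_predT; apply: eq_in_count => j.
  rewrite mem_iota /gapb => H; apply/or3P; constructor 1; lia.
have e2 : count (preim (addn m.+1) (gapb m.+1 t)) (iota 1 m) = count (fun v => 2 <= v)%N t.
  have -> : count (fun v => 2 <= v)%N t = count (fun i => 2 <= xat t i)%N (iota 1 m) by rewrite -{1}(map_xat t) count_map st.
  apply: eq_in_count => j.
  rewrite mem_iota /gapb /= => H.
  rewrite addKn; lia.
have e3 : count (preim (addn (2 * m.+1)) (gapb m.+1 t)) (iota 1 m) = count (fun v => 3 <= v)%N t.
  have -> : count (fun v => 3 <= v)%N t = count (fun i => 3 <= xat t i)%N (iota 1 m) by rewrite -{1}(map_xat t) count_map st.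
  apply: eq_in_count => j.
  rewrite mem_iota /gapb /= => H.
  rewrite addKn; lia.
have z2 : gapb m.+1 t (m.+1 + 0) = false by rewrite /gapb addn0; lia.
have z3 : gapb m.+1 t (2 * m.+1 + 0) = false by rewrite /gapb addn0; lia.
rewrite e1 e2 e3 z2 z3 /=.
lia.
Qed.

Definition clo m t := forall i i', (0 < i)%N -> (0 < i')%N -> (i + i' < m)%N ->
  (xat t i <= 1)%N -> (xat t i' <= 1)%N -> (xat t (i + i') <= 2)%N.

Lemma enc_ns m t : (0 < m)%N -> clo m t -> is_ns_gaps (enc m t).
Proof.
move=> m0 cl; split; first by rewrite in_enc /gapb; lia.
move=> a b; rewrite !in_enc => ha hb.
case: (posnP a) => [->|a0]; first by rewrite add0n.
case: (posnP b) => [->|b0]; first by rewrite addn0.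
have am : (m <= a)%N by move: ha; rewrite /gapb; lia.
have bm : (m <= b)%N by move: hb; rewrite /gapb; lia.
case: (ltnP (a + b) (3 * m)) => h3; last by rewrite /gapb; lia.
case: (ltnP (2 * m) (a + b)) => h2; last by rewrite /gapb; lia.
have [i ei] : exists i, a = m + i by exists (a - m); lia.
have [i' ei'] : exists i', b = m + i' by exists (b - m); lia.
subst a b.
rewrite /gapb addKn in ha; rewrite /gapb addKn in hb.
have e : (m + i + (m + i') - 2 * m = i + i')%N by lia.
rewrite /gapb e.
case: (posnP i) => [i0|ip].
  subst i; rewrite add0n; rewrite add0n in e; lia.
case: (posnP i') => [i0|ip'].
  subst i'; rewrite !addn0; lia.
have := cl i i' ip ip'; lia.
Qed.

Lemma enc_mult m t : (0 < m)%N -> multiplicity_is (enc m t) m.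
Proof.
move=> m0; split => //; first by rewrite in_enc /gapb; lia.
move=> j hj; rewrite in_enc /gapb; apply/or3P; constructor 1; lia.
Qed.

Definition lvl m (G : {fset nat}) i : nat :=
  if m + i \in G then (if 2 * m + i \in G then 3 else 2) else 1.
Definition dec m G := mkseq (fun i => lvl m G i.+1) m.-1.

Lemma size_dec m G : size (dec m G) = m.-1.
Proof. by rewrite size_mkseq. Qed.

Lemma xat_dec m G i : (0 < i < m)%N -> xat (dec m G) i = lvl m G i.
Proof.
move=> h; rewrite /xat /dec nth_mkseq; last by lia.
by rewrite prednK //; lia.
Qed.

Definition shp m t := size t = m.-1 /\ all (fun v => 0 < v <= 3)%N t.

Lemma dec_enc m t : (0 < m)%N -> shp m t -> dec m (enc m t) = t.
Proof.
move=> m0 [st al]; apply: (@eq_from_nth _ 0%N); first by rewrite size_dec st.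
rewrite size_dec => k hk; rewrite nth_mkseq // /lvl !in_enc /gapb.
rewrite !addKn.
have : (0 < nth 0 t k <= 3)%N by apply: (allP al); apply: mem_nth; rewrite st.
have -> : xat t k.+1 = nth 0 t k by rewrite /xat.
have -> : (0 < m + k.+1 < m) = false by lia.
have -> : (m < m + k.+1 < 2 * m) = true by lia.
have -> : (2 * m < m + k.+1 < 3 * m) = false by lia.
have -> : (0 < 2 * m + k.+1 < m) = false by lia.
have -> : (m < 2 * m + k.+1 < 2 * m) = false by lia.
have -> : (2 * m < 2 * m + k.+1 < 3 * m) = true by lia.
by case: (nth 0 t k) => [|[|[|[|v]]]].
Qed.

Lemma enc_inj m t1 t2 : (0 < m)%N -> shp m t1 -> shp m t2 -> enc m t1 = enc m t2 -> t1 = t2.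
Proof. by move=> m0 h1 h2 e; rewrite -(dec_enc m0 h1) -(dec_enc m0 h2) e. Qed.

Lemma pair_count (p : pred nat) lo len :
  (forall i, (lo <= i < lo + len)%N -> p i || p (2 * lo + len - 1 - i)%N) ->
  (len <= 2 * count p (iota lo len))%N.
Proof.
elim: len {-2}len (leqnn len) lo => [|n IH] len hl lo h.
  by have -> : len = 0%N by lia.
case: len hl h => [|[|l]] hl h //.
  have := h lo; rewrite /=; have -> : (2 * lo + 1 - 1 - lo = lo)%N by lia.
  rewrite orbb addn0 => /(_ _) ->; lia.
have -> : iota lo l.+2 = lo :: (iota lo.+1 l ++ [:: lo.+1 + l])%N.
  have -> : l.+2 = (1 + (l + 1))%N by lia.
  by rewrite !iotaD /= !addn1.
rewrite /= count_cat /=.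
have IH' := IH l ltac:(lia) lo.+1.
have H1 : (l <= 2 * count p (iota lo.+1 l))%N.
  apply: IH' => i hi; have := h i ltac:(lia).
  by have -> : (2 * lo.+1 + l - 1 - i = 2 * lo + l.+2 - 1 - i)%N by lia.
have := h lo ltac:(lia).
have -> : (2 * lo + l.+2 - 1 - lo = lo.+1 + l)%N by lia.
case: (p lo); case: (p (lo.+1 + l)) => //=; lia.
Qed.

Lemma split_iota (q : pred nat) m c : (0 < c < m)%N ->
  count q (iota 1 m.-1) = (count q (iota 1 c.-1) + q c + count q (iota c.+1 (m.-1 - c)))%N.
Proof.
move=> h.
have -> : m.-1 = (c.-1 + (m.-1 - c).+1)%N by lia.
rewrite iotaD count_cat.
have -> : (1 + c.-1 = c)%N by lia.
have -> : (c.-1 + (m.-1 - c).+1 - c = m.-1 - c)%N by lia.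
by rewrite /= addnA.
Qed.

Lemma cnt_bound m K (G : {fset nat}) e : (0 < m)%N -> #|` G| = (m.-1 + K)%N ->
  (forall j, (0 < j < m)%N -> j \in G) -> e \in G -> (2 * m <= e)%N ->
  (count (fun i => m + i \in G) (iota 1 m.-1) + 1 <= K)%N.
Proof.
move=> m0 cG lowG eG e2.
pose l := iota 1 m.-1 ++ [seq m + i | i <- iota 1 m.-1 & m + i \in G] ++ [:: e].
have ul : uniq l.
  rewrite /l !cat_uniq iota_uniq /= map_inj_uniq ?filter_uniq ?iota_uniq; last exact: addnI.
  rewrite !andbT; apply/andP; split.
    apply/hasPn => x; rewrite mem_cat inE => /orP[/mapP[i]|/eqP->].
      by rewrite mem_filter mem_iota => /andP[_ hi] ->; rewrite mem_iota; lia.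
    by rewrite mem_iota; lia.
  rewrite orbF /=; apply/negP => /mapP[i]; rewrite mem_filter mem_iota => /andP[_ hi]; lia.
  by [].
have sl : {subset l <= enum_fset G}.
  move=> x; rewrite /l !mem_cat inE => /or3P[|/mapP[i]|/eqP->] //.
  - by rewrite mem_iota => hx; apply: lowG; lia.
  - by rewrite mem_filter => /andP[? _] ->.
have := uniq_leq_size ul sl.
rewrite /l !size_cat size_map size_filter size_iota /=.
rewrite cG; lia.
Qed.

Section GSide.
Variables (m K : nat) (G : {fset nat}).
Hypotheses (m0 : (0 < m)%N) (ns : is_ns_gaps G) (cG : #|` G| = (m.-1 + K)%N)
  (mu : multiplicity_is G m) (hm : (3 * K <= m)%N).

Lemma mnotin : m \notin G.
Proof. by case: mu. Qed.

Lemma lowG j : (0 < j < m)%N -> j \in G.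
Proof. by case: mu => _ _; apply. Qed.

Lemma sub_m j : j \in G -> (m <= j)%N -> j - m \in G.
Proof.
move=> jG hj; apply/negPn/negP => h.
have := ns.2 _ _ h mnotin; rewrite subnK //; by rewrite jG.
Qed.

Lemma add_notin a b : a \notin G -> b \notin G -> a + b \notin G.
Proof. exact: ns.2. Qed.

Lemma reduce4 j : j \in G -> (3 * m <= j)%N -> exists2 c, (c < m)%N & 3 * m + c \in G.
Proof.
elim: j {-2}j (leqnn j) => [|n IH] j hj jG h3.
  by exfalso; lia.
case: (ltnP j (4 * m)) => h4.
  exists (j - 3 * m)%N; first lia.
  by rewrite subnKC.
apply: (IH (j - m)%N); first lia; last lia.
by apply: sub_m => //; lia.
Qed.

Lemma no_big j : (3 * m <= j)%N -> j \notin G.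
Proof.
move=> h3; apply/negP => jG.
have [c cm cG3] := reduce4 jG h3.
have n2 : 2 * m \notin G.
  by rewrite mul2n -addnn; apply: add_notin; exact: mnotin.
case: (posnP c) => [c0|cp].
  subst c; move: cG3; rewrite addn0 (_ : 3 * m = 2 * m + m)%N; last by lia.
  by move/negP: (add_notin n2 mnotin).
have c2 : 2 * m + c \in G.
  by have := sub_m cG3 ltac:(lia); rewrite (_ : 3 * m + c - m = 2 * m + c)%N //; lia.
have c1 : m + c \in G.
  by have := sub_m c2 ltac:(lia); rewrite (_ : 2 * m + c - m = m + c)%N //; lia.
pose p := fun i => m + i \in G.
have A1 := @pair_count p 1 c.-1.
have A2 := @pair_count p c.+1 (m.-1 - c).
have B := cnt_bound m0 cG lowG c2 ltac:(lia).
rewrite (@split_iota _ m c) in B; last by lia.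
have : (c.-1 <= 2 * count p (iota 1 c.-1))%N.
  apply: A1 => i hi; rewrite /p; apply/negPn/negP => /norP[h1 h2].
  have := add_notin h1 h2.
  by rewrite (_ : m + i + (m + (2 * 1 + c.-1 - 1 - i)) = 2 * m + c)%N ?c2 //; lia.
have : (m.-1 - c <= 2 * count p (iota c.+1 (m.-1 - c)))%N.
  apply: A2 => i hi; rewrite /p; apply/negPn/negP => /norP[h1 h2].
  have := add_notin h1 h2.
  by rewrite (_ : m + i + (m + (2 * c.+1 + (m.-1 - c) - 1 - i)) = 3 * m + c)%N ?cG3 //; lia.
move: B; rewrite /p c1 /=; lia.
Qed.

Lemma lvl3 j : (0 < j < m)%N -> 2 * m + j \in G -> (j + 3 <= 2 * K)%N.
Proof.
move=> hj c2.
have c1 : m + j \in G.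
  by have := sub_m c2 ltac:(lia); rewrite (_ : 2 * m + j - m = m + j)%N //; lia.
pose p := fun i => m + i \in G.
have A1 := @pair_count p 1 j.-1.
have B := cnt_bound m0 cG lowG c2 ltac:(lia).
rewrite (@split_iota _ m j) in B; last by lia.
have : (j.-1 <= 2 * count p (iota 1 j.-1))%N.
  apply: A1 => i hi; rewrite /p; apply/negPn/negP => /norP[h1 h2].
  have := add_notin h1 h2.
  by rewrite (_ : m + i + (m + (2 * 1 + j.-1 - 1 - i)) = 2 * m + j)%N ?c2 //; lia.
move: B; rewrite /p c1 /=; lia.
Qed.

End GSide.

Section GSide2.
Variables (m K : nat) (G : {fset nat}).
Hypotheses (m0 : (0 < m)%N) (ns : is_ns_gaps G) (cG : #|` G| = (m.-1 + K)%N)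
  (mu : multiplicity_is G m) (hm : (3 * K <= m)%N).

Lemma enc_dec : enc m (dec m G) = G.
Proof.
apply/fsetP => j; rewrite in_enc /gapb.
case: (posnP j) => [->|j0].
  by rewrite (negbTE ns.1); lia.
have [jm|jm] := ltnP j m.
  have jG : j \in G by apply: (lowG mu); lia.
  by rewrite jG; lia.
have [e1|e1] := eqVneq j m.
  by subst j; rewrite (negbTE (mnotin mu)); lia.
have [j2|j2] := ltnP j (2 * m).
  rewrite (@xat_dec m G (j - m)); last by lia.
  rewrite /lvl subnKC; last by lia.
  have jm' : (m < j)%N by rewrite ltn_neqAle eq_sym e1 jm.
  by repeat (case: ifP => _); lia.
have [e2|e2] := eqVneq j (2 * m).
  subst j; have n2 : 2 * m \notin G.
    by rewrite mul2n -addnn; apply: (add_notin ns); exact: (mnotin mu).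
  by rewrite (negbTE n2); lia.
have [j3|j3] := ltnP j (3 * m).
  have jm' : (2 * m < j)%N by rewrite ltn_neqAle eq_sym e2 j2.
  rewrite (@xat_dec m G (j - 2 * m)); last by lia.
  rewrite /lvl.
  have -> : (2 * m + (j - 2 * m) = j)%N by lia.
  case jG: (j \in G).
    have -> : m + (j - 2 * m) \in G.
      have := sub_m ns mu jG ltac:(lia).
      by rewrite (_ : j - m = m + (j - 2 * m))%N //; lia.
    lia.
  by repeat (case: ifP => _); lia.
rewrite (negbTE (no_big m0 ns cG mu hm j3)).
lia.
Qed.

Lemma shp_dec : shp m (dec m G).
Proof.
split; first exact: size_dec.
apply/allP => v /mapP [i _ ->]; rewrite /lvl.
by repeat (case: ifP => _).
Qed.

Lemma clo_dec : clo m (dec m G).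
Proof.
move=> i i' i0 i'0 hs.
rewrite !xat_dec; try lia.
rewrite /lvl.
case h1: (m + i \in G) => //; first by case: (_ \in G).
case h2: (m + i' \in G) => //; first by case: (_ \in G).
move=> _ _.
have := add_notin ns (negbT h1) (negbT h2).
rewrite (_ : m + i + (m + i') = 2 * m + (i + i'))%N; last by lia.
move/negbTE ->; by case: (_ \in G).
Qed.

Lemma weight_dec :
  (count (fun v => 2 <= v) (dec m G) + count (fun v => 3 <= v) (dec m G) = K)%N.
Proof.
have := count_enc m0 (size_dec m G).
rewrite enc_dec cG; lia.
Qed.

Lemma lvl3_dec i : (0 < i < m)%N -> (3 <= xat (dec m G) i)%N -> (i + 3 <= 2 * K)%N.
Proof.
move=> hi; rewrite xat_dec // /lvl.
case: (m + i \in G) => //; case h: (2 * m + i \in G) => // _.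
exact: (lvl3 m0 ns cG mu hm hi h).
Qed.

End GSide2.

Definition in123 (v : nat) : bool := (0 < v <= 3)%N.
Definition in12 (v : nat) : bool := (0 < v <= 2)%N.

Lemma mem_allseq n x : (x \in allseq n) = (size x == n) && all in123 x.
Proof.
elim: n x => [|n IH] [|v x] //.
- by apply/negP => /allpairsP [[a b] /= [_ _]].
change (v :: x \in [seq v :: s | v <- [:: 1; 2; 3]%N, s <- allseq n]) with
  (v :: x \in [seq a :: s | a <- [:: 1; 2; 3]%N, s <- allseq n]).
apply/allpairsP/idP => [[[a b] /= [ha hb [-> ->]]]|/andP[sx /andP[hv ax]]].
  rewrite /= eqSS.
  move: hb; rewrite IH => /andP[-> ->]; rewrite andbT.
  by move: ha; rewrite !inE /in123 => /or3P[]/eqP->.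
rewrite /= eqSS in sx.
exists (v, x) => /=; split => //; last by rewrite IH sx.
by move: hv; rewrite /in123 !inE; case: v => [|[|[|[|v]]]].
Qed.

Lemma uniq_allseq n : uniq (allseq n).
Proof.
elim: n => // n IH; apply: allpairs_uniq => //.
by move=> [a b] [c d] _ _ /= [-> ->].
Qed.

Fixpoint Zs (M j : nat) : seq (seq nat) :=
  match M with
  | 0 => if j is 0 then [:: [::]] else [::]
  | M'.+1 => map (cons 1%N) (Zs M' j) ++
             (if j is j'.+1 then map (cons 2%N) (Zs M' j') else [::])
  end.

Lemma size_Zs M j : size (Zs M j) = 'C(M, j).
Proof.
elim: M j => [|M IH] [|j] //=; rewrite size_cat size_map ?IH //=.
  by rewrite !bin0 addn0.
by rewrite size_map IH binS addnC.
Qed.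

Lemma mem_Zs M j y : (y \in Zs M j) = [&& size y == M, all in12 y & count (pred1 2%N) y == j].
Proof.
elim: M j y => [|M IH] j [|v y] /=.
- by case: j.
- by case: j.
- rewrite mem_cat; apply/negP => /orP[/mapP[? _] //|]; case: j => // j /mapP[? _] //.
rewrite mem_cat eqSS.
apply/orP/idP => [[/mapP[z hz [-> ->]]|]|].
- by move: hz; rewrite IH /in12 /=.
- case: j => // j /mapP[z hz [-> ->]].
  move: hz; rewrite IH => /and3P[-> -> /eqP ->]. by rewrite /in12 /= add1n.
case/and3P => sy /andP[hv ay] cy.
move: hv; rewrite /in12; case: v cy => [|[|[|v]]] //= cy _.
  by left; apply/mapP; exists y => //; rewrite IH sy ay.
right; case: j cy => // j cy; apply/mapP; exists y => //.
by rewrite IH sy ay /=; rewrite add1n eqSS in cy.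
Qed.

Lemma uniq_Zs M j : uniq (Zs M j).
Proof.
elim: M j => [|M IH] [|j] //=.
  by rewrite cats0 map_inj_uniq // => a b [].
rewrite cat_uniq !map_inj_uniq ?IH //; try by move=> a b [].
rewrite andbT /=; apply/hasPn => z /mapP[a _ ->].
by apply/negP => /mapP[b _].
Qed.

Lemma uniq_catpairs (xs : seq (seq nat)) (f : seq nat -> seq (seq nat)) n :
  uniq xs -> (forall x, x \in xs -> size x = n) -> (forall x, uniq (f x)) ->
  uniq [seq x ++ y | x <- xs, y <- f x].
Proof.
elim: xs => //= x xs IH /andP[nx ux] sz uf.
rewrite cat_uniq IH ?andbT //; last by move=> z zi; apply: sz; rewrite inE zi orbT.
rewrite map_inj_uniq ?uf /=; last first.
  by move=> y1 y2 /eqP; rewrite eqseq_cat // => /andP[_ /eqP].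
apply/hasPn => z /allpairsPdep[x' [y' [x'in _ ->]]]; apply/negP => /mapP[y _ e].
move/eqP: e; rewrite eqseq_cat; last by rewrite (sz x') ?(sz x) // inE ?eqxx ?x'in ?orbT.
by case/andP => /eqP ex _; move: nx; rewrite -ex x'in.
Qed.

Lemma cnt123 x : all in123 x ->
  count (fun v => 2 <= v)%N x = (a_of x + b_of x)%N /\ count (fun v => 3 <= v)%N x = b_of x.
Proof.
rewrite /a_of /b_of; elim: x => //= v x IH /andP[hv hx].
case: (IH hx) => -> ->; move: hv; rewrite /in123.
by case: v => [|[|[|[|v]]]] //= _; split; lia.
Qed.

Lemma cnt12 y : all in12 y ->
  count (fun v => 2 <= v)%N y = count (pred1 2%N) y /\ count (fun v => 3 <= v)%N y = 0%N.
Proof.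
elim: y => //= v y IH /andP[hv hy].
case: (IH hy) => -> ->; move: hv; rewrite /in12.
by case: v => [|[|[|v]]] //= _; split; lia.
Qed.

Lemma xat_P (P : pred nat) s k : all P s -> (0 < k <= size s)%N -> P (xat s k).
Proof. move=> /allP al hk; apply: al; rewrite /xat; apply: mem_nth.
by case: k hk => [|k] //= /andP[]. Qed.

Lemma xat_le s k b : all (fun v => v <= b)%N s -> (xat s k <= b)%N.
Proof.
move=> al; rewrite /xat; case: (ltnP k.-1 (size s)) => h.
  by apply: (allP al); apply: mem_nth.
by rewrite nth_default.
Qed.

Lemma xat_cat x y k : (0 < k)%N ->
  xat (x ++ y) k = if (k <= size x)%N then xat x k else xat y (k - size x).
Proof.
move=> k0; rewrite /xat nth_cat.
case: ifP => h1; case: ifP => h2 //; try lia.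
by congr nth; lia.
Qed.

Definition YK K := [seq x <- allseq (2 * K).-1 | cond_i x && (a_of x + 2 * b_of x <= K)%N].
Definition jx K x := (K - (a_of x + 2 * b_of x))%N.
Definition Tl m K := [seq x ++ y | x <- YK K, y <- Zs (m.-1 - (2 * K).-1) (jx K x)].

Lemma Tl_good m K t : (0 < m)%N -> (3 * K <= m)%N -> t \in Tl m K ->
  [/\ shp m t, clo m t & (count (fun v => 2 <= v) t + count (fun v => 3 <= v) t = K)%N].
Proof.
move=> m0 hm /allpairsPdep [x [y [hx hy ->]]].
move: hx; rewrite mem_filter mem_allseq => /andP[/andP[ci hab] /andP[/eqP sx ax]].
move: hy; rewrite mem_Zs => /and3P[/eqP sy ay /eqP cy].
have ay3 : all in123 y by apply: sub_all ay => v; rewrite /in12 /in123; lia.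
split.
- split; first by rewrite size_cat sx sy; lia.
  by rewrite all_cat ax ay3.
- move=> i i' i0 i'0 hs h1 h2.
  case: (leqP (i + i') (2 * K).-1) => hn.
  + move: h1 h2; rewrite !xat_cat ?sx ?addn_gt0 ?i0 //.
    have -> : (i <= (2 * K).-1)%N = true by lia.
    have -> : (i' <= (2 * K).-1)%N = true by lia.
    rewrite hn => h1 h2.
    have v1 := @xat_P _ x i ax ltac:(rewrite sx; lia).
    have v2 := @xat_P _ x i' ax ltac:(rewrite sx; lia).
    have v3 := @xat_P _ x (i + i') ax ltac:(rewrite sx; lia).
    move: ci => /allP /(_ i) ci; move: ci; rewrite mem_iota ?sx => /(_ ltac:(lia)).
    move=> /allP /(_ i') ci; move: ci; rewrite mem_iota ?sx => /(_ ltac:(lia)).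
    move=> /allP /(_ (i + i')) ci; move: ci; rewrite mem_iota ?sx => /(_ ltac:(lia)).
    rewrite eqxx /=.
    move: v1 v2 v3; rewrite /in123; lia.
  + rewrite xat_cat ?addn_gt0 ?i0 // sx.
    have -> : (i + i' <= (2 * K).-1)%N = false by lia.
    by apply: xat_le; apply: sub_all ay => v; rewrite /in12; lia.
- rewrite !count_cat; case: (cnt123 ax) => -> ->; case: (cnt12 ay) => -> ->.
  rewrite cy /jx; lia.
Qed.

Lemma xat_take n t i : (0 < i <= n)%N -> xat (take n t) i = xat t i.
Proof. by move=> h; rewrite /xat nth_take //; lia. Qed.

Section GSide3.
Variables (m K : nat) (G : {fset nat}).
Hypotheses (m0 : (0 < m)%N) (ns : is_ns_gaps G) (cG : #|` G| = (m.-1 + K)%N)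
  (mu : multiplicity_is G m) (hm : (3 * K <= m)%N).

Lemma dec_in_Tl : dec m G \in Tl m K.
Proof.
have [st at3] := shp_dec m G.
have W := weight_dec m0 ns cG mu hm.
have C := clo_dec m0 ns cG hm.
have L3 := lvl3_dec m0 ns cG mu hm.
set t := dec m G in st at3 W C L3 *.
set n := (2 * K).-1.
have hn : (n <= size t)%N by rewrite st /n; lia.
rewrite -(cat_take_drop n t) count_cat count_cat in W.
have at3' : all in123 (take n t) by apply/allP => v /mem_take; apply: (allP at3).
have [c2 c3] := cnt123 at3'.
rewrite c2 c3 in W.
rewrite -(cat_take_drop n t).
apply: allpairs_f_dep.
  rewrite mem_filter mem_allseq size_takel // eqxx at3' /= andbT.
  apply/andP; split; last by lia.
  apply/allP => i1; rewrite mem_iota size_takel // => h1.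
  apply/allP => i2; rewrite mem_iota => h2.
  apply/allP => i3; rewrite mem_iota => h3.
  apply/implyP => /eqP e; subst i3; apply/negP => /and3P[/eqP e1 /eqP e2 /eqP e3].
  rewrite !xat_take in e1 e2 e3; try lia.
  have := C i1 i2 ltac:(lia) ltac:(lia) ltac:(rewrite /n in h3; lia).
  by rewrite e1 e2 e3 => /(_ (leqnn _) (leqnn _)).
have ad12 : all in12 (drop n t).
  apply/(all_nthP 0%N) => k hk; rewrite nth_drop.
  rewrite size_drop in hk.
  have e : nth 0 t (n + k) = xat t (n + k).+1 by [].
  have v := @xat_P _ t (n + k).+1 at3 ltac:(lia).
  rewrite e /in12; move: v; rewrite /in123.
  case: (leqP 3 (xat t (n + k).+1)) => h; last by lia.
  have := L3 (n + k).+1 ltac:(rewrite st in hk; lia) h.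
  rewrite /n; lia.
have [d2 d3] := cnt12 ad12.
rewrite d2 d3 in W.
rewrite mem_Zs size_drop st eqxx ad12 /= /jx.
  move: W; set c := count_mem 2 (drop n t); set a := a_of _; set b := b_of _ => W.
  apply/eqP; lia.
Qed.

End GSide3.

Lemma main_nat K g : (4 * K <= g + 1)%N ->
  exists s : seq {fset nat},
    [/\ uniq s,
        (forall G : {fset nat}, G \in s <->
           [/\ is_ns_gaps G, genus G = g & multiplicity_is G (g + 1 - K)]) &
        size s = (\sum_(x <- YK K) 'C(g + 1 - 3 * K, jx K x))%N].
Proof.
move=> hg; set m := (g + 1 - K)%N.
have m0 : (0 < m)%N by rewrite /m; lia.
have hm : (3 * K <= m)%N by rewrite /m; lia.
exists (map (enc m) (Tl m K)); split.
- rewrite map_inj_in_uniq.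
    apply: (@uniq_catpairs _ _ (2 * K).-1).
    + by rewrite filter_uniq // uniq_allseq.
    + by move=> x; rewrite mem_filter mem_allseq => /andP[_ /andP[/eqP]].
    + by move=> x; apply: uniq_Zs.
  move=> t1 t2 h1 h2; apply: enc_inj => //.
    by case: (Tl_good m0 hm h1).
  by case: (Tl_good m0 hm h2).
- move=> G; split.
    case/mapP => t ht ->; have [sh cl w] := Tl_good m0 hm ht.
    split; first exact: enc_ns.
      by rewrite /genus (count_enc m0 sh.1) -addnA w /m; lia.
    exact: enc_mult.
  case=> ns gG mu; apply/mapP; exists (dec m G).
    by apply: dec_in_Tl => //; rewrite /genus in gG; rewrite gG /m; lia.
  rewrite (enc_dec m0 ns _ mu hm) //; rewrite /genus in gG; rewrite gG /m; lia.
- rewrite size_map /Tl size_allpairs_dep sumnE big_map.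
  apply: eq_big_seq => x hx; rewrite size_Zs.
  have [K0|Kp] := posnP K.
    by rewrite /jx K0 !sub0n !bin0.
  congr binomial; rewrite /m; lia.
Qed.

Unset Implicit Arguments.
Lemma Y_YK (k : int) (K : nat) : (k = K%:Z - 1)%R -> Y k = YK K.
Proof.
case: K => [|K] ->; first by [].
rewrite /Y /YK.
have -> : (K.+1%:Z - 1 = Posz K)%R by lia.
have -> : (2 * K.+1).-1 = (2 * K).+1 by lia.
apply: eq_filter => x; congr andb; rewrite /cond_ii; lia.
Qed.

Theorem theorem8p9 (k : int) (hk : (-1 <= k)%R) (g : nat)
    (hg : (4 * k + 3 <= g%:Z)%R) :
  exists s : seq {fset nat},
    [/\ uniq s,
        (forall G : {fset nat},
           G \in s <-> [/\ is_ns_gaps G, genus G = g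
                         & multiplicity_is G (absz (g%:Z - k)%R)]) &
        size s =
          (\sum_(x <- Y k)
             'C(absz (g%:Z - 3 * k - 2)%R,
                absz (k + 1 - (a_of x)%:Z - 2 * (b_of x)%:Z)%R))%N].
Proof.
set K := absz (k + 1)%R.
have kK : (k = K%:Z - 1)%R by rewrite /K; lia.
have hK : (4 * K <= g + 1)%N by rewrite /K; lia.
have [s [us ms ss]] := main_nat hK.
exists s; split => //.
  move=> G; have -> : absz (g%:Z - k)%R = (g + 1 - K)%N by rewrite /K; lia.
  exact: ms.
rewrite ss (@Y_YK k K kK).
apply: eq_big_seq => x; rewrite mem_filter => /andP[/andP[_ hab] _].
congr binomial; rewrite /jx; lia.
Qed.
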